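(* Let $F\colon\mathbb{A}\to\mathbb{B}$ be a double functor satisfying the following three conditions. (hb3) For every square $\beta\colon(e_{FA}\,{}^{Fa}_{Fc}\,e_{FC})$ in $\mathbb{B}$ there is a unique square $\alpha\colon(e_A\,{}^{a}_{c}\,e_C)$ in $\mathbb{A}$ with $F\alpha=\beta$. (vb2) For every square $\beta\colon(Fu\,{}^{b}_{d}\,Fu')$ in $\mathbb{B}$, with $u\colon A\to A'$, $u'\colon C\to C'$ vertical in $\mathbb{A}$, there exist a square $\alpha\colon(u\,{}^{a}_{c}\,u')$ in $\mathbb{A}$ and vertically invertible squares $\psi_0\colon(e_{FA}\,{}^{b}_{Fa}\,e_{FC})$ and $\psi_1\colon(e_{FA'}\,{}^{d}_{Fc}\,e_{FC'})$ in $\mathbb{B}$ such that the vertical composite of $\psi_0$ on top of $F\alpha$ equals the vertical composite of $\beta$ on top of $\psi_1$. (vb3) For all squares $\alpha\colon(u\,{}^{a}_{c}\,u')$ and $\alpha'\colon(u\,{}^{a'}_{c'}\,u')$ in $\mathbb{A}$ and squares $\tau_0\colon(e_{FA}\,{}^{Fa}_{Fa'}\,e_{FC})$, $\tau_1\colon(e_{FA'}\,{}^{Fc}_{Fc'}\,e_{FC'})$ in $\mathbb{B}$ such that $\tau_0$ on top of $F\alpha'$ equals $F\alpha$ on top of $\tau_1$, there exist unique squares $\sigma_0\colon(e_A\,{}^{a}_{a'}\,e_C)$, $\sigma_1\colon(e_{A'}\,{}^{c}_{c'}\,e_{C'})$ in $\mathbb{A}$ with $F\sigma_0=\tau_0$,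 $F\sigma_1=\tau_1$, and $\sigma_0$ on top of $\alpha'$ equal to $\alpha$ on top of $\sigma_1$. Then for every square $\beta\colon(Fu\,{}^{Fa}_{Fc}\,Fu')$ in $\mathbb{B}$ there exists a unique square $\alpha\colon(u\,{}^{a}_{c}\,u')$ in $\mathbb{A}$ such that $F\alpha=\beta$.
   Context: A double category has objects, horizontal morphisms, vertical morphisms and squares; $\alpha\colon(u\,{}^{a}_{b}\,v)$ denotes a square with top horizontal boundary $a$, bottom horizontal boundary $b$, left vertical boundary $u$ and right vertical boundary $v$. Horizontal and vertical composition of squares are strictly associative and unital and satisfy interchange; $e_A$ is the vertical identity morphism on $A$. A square is vertically invertible if it has an inverse for vertical composition. Double functors preserve all structure strictly. *)

(* Defs.v *)
(* Objects, horizontal morphisms, vertical morphisms and squares are each a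
   single type, with boundary functions.  Compositions are total functions;
   all axioms are only imposed on composable pairs (values on non-composable
   pairs are irrelevant junk).  Composition is written in diagrammatic order:
   hcomp a b = "a then b", vcomp u v = "u then v",
   sq_vcomp s t = "s on top of t", sq_hcomp s t = "s to the left of t".
   A square s : (u ^a_b v) has top s = a, bot s = b, lft s = u, rgt s = v. *)

Record DoubleCat := {
  Ob : Type;
  HM : Type;  hs : HM -> Ob;  ht : HM -> Ob;
  VM : Type;  vs : VM -> Ob;  vt : VM -> Ob;
  Sq : Type;
  top : Sq -> HM;  bot : Sq -> HM;  lft : Sq -> VM;  rgt : Sq -> VM;

  hid : Ob -> HM;
  hcomp : HM -> HM -> HM;
  hid_src : forall A, hs (hid A) = A;
  hid_tgt : forall A, ht (hid A) = A;
  hcomp_src : forall a b, ht a = hs b -> hs (hcomp a b) = hs a;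
  hcomp_tgt : forall a b, ht a = hs b -> ht (hcomp a b) = ht b;
  hcomp_idl : forall a, hcomp (hid (hs a)) a = a;
  hcomp_idr : forall a, hcomp a (hid (ht a)) = a;
  hcomp_assoc : forall a b c, ht a = hs b -> ht b = hs c ->
    hcomp (hcomp a b) c = hcomp a (hcomp b c);

  vid : Ob -> VM;
  vcomp : VM -> VM -> VM;
  vid_src : forall A, vs (vid A) = A;
  vid_tgt : forall A, vt (vid A) = A;
  vcomp_src : forall u v, vt u = vs v -> vs (vcomp u v) = vs u;
  vcomp_tgt : forall u v, vt u = vs v -> vt (vcomp u v) = vt v;
  vcomp_idl : forall u, vcomp (vid (vs u)) u = u;
  vcomp_idr : forall u, vcomp u (vid (vt u)) = u;
  vcomp_assoc : forall u v w, vt u = vs v -> vt v = vs w ->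
    vcomp (vcomp u v) w = vcomp u (vcomp v w);

  sq_corner_tl : forall s, hs (top s) = vs (lft s);
  sq_corner_tr : forall s, ht (top s) = vs (rgt s);
  sq_corner_bl : forall s, hs (bot s) = vt (lft s);
  sq_corner_br : forall s, ht (bot s) = vt (rgt s);

  sq_hid : VM -> Sq;
  sq_vid : HM -> Sq;
  sq_hid_top : forall u, top (sq_hid u) = hid (vs u);
  sq_hid_bot : forall u, bot (sq_hid u) = hid (vt u);
  sq_hid_lft : forall u, lft (sq_hid u) = u;
  sq_hid_rgt : forall u, rgt (sq_hid u) = u;
  sq_vid_top : forall a, top (sq_vid a) = a;
  sq_vid_bot : forall a, bot (sq_vid a) = a;
  sq_vid_lft : forall a, lft (sq_vid a) = vid (hs a);
  sq_vid_rgt : forall a, rgt (sq_vid a) = vid (ht a);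

  sq_hcomp : Sq -> Sq -> Sq;
  sq_vcomp : Sq -> Sq -> Sq;
  sq_hcomp_top : forall s t, rgt s = lft t -> top (sq_hcomp s t) = hcomp (top s) (top t);
  sq_hcomp_bot : forall s t, rgt s = lft t -> bot (sq_hcomp s t) = hcomp (bot s) (bot t);
  sq_hcomp_lft : forall s t, rgt s = lft t -> lft (sq_hcomp s t) = lft s;
  sq_hcomp_rgt : forall s t, rgt s = lft t -> rgt (sq_hcomp s t) = rgt t;
  sq_vcomp_top : forall s t, bot s = top t -> top (sq_vcomp s t) = top s;
  sq_vcomp_bot : forall s t, bot s = top t -> bot (sq_vcomp s t) = bot t;
  sq_vcomp_lft : forall s t, bot s = top t -> lft (sq_vcomp s t) = vcomp (lft s) (lft t);
  sq_vcomp_rgt : forall s t, bot s = top t -> rgt (sq_vcomp s t) = vcomp (rgt s) (rgt t);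

  sq_hcomp_idl : forall s, sq_hcomp (sq_hid (lft s)) s = s;
  sq_hcomp_idr : forall s, sq_hcomp s (sq_hid (rgt s)) = s;
  sq_vcomp_idl : forall s, sq_vcomp (sq_vid (top s)) s = s;
  sq_vcomp_idr : forall s, sq_vcomp s (sq_vid (bot s)) = s;
  sq_hcomp_assoc : forall s t r, rgt s = lft t -> rgt t = lft r ->
    sq_hcomp (sq_hcomp s t) r = sq_hcomp s (sq_hcomp t r);
  sq_vcomp_assoc : forall s t r, bot s = top t -> bot t = top r ->
    sq_vcomp (sq_vcomp s t) r = sq_vcomp s (sq_vcomp t r);

  sq_hid_vid : forall A, sq_hid (vid A) = sq_vid (hid A);
  sq_hid_vcomp : forall u v, vt u = vs v ->
    sq_hid (vcomp u v) = sq_vcomp (sq_hid u) (sq_hid v);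
  sq_vid_hcomp : forall a b, ht a = hs b ->
    sq_vid (hcomp a b) = sq_hcomp (sq_vid a) (sq_vid b);
  interchange : forall s t s' t',
    rgt s = lft t -> rgt s' = lft t' -> bot s = top s' -> bot t = top t' ->
    sq_vcomp (sq_hcomp s t) (sq_hcomp s' t') = sq_hcomp (sq_vcomp s s') (sq_vcomp t t')
}.

Arguments hs {d}. Arguments ht {d}. Arguments vs {d}. Arguments vt {d}.
Arguments top {d}. Arguments bot {d}. Arguments lft {d}. Arguments rgt {d}.
Arguments hid {d}. Arguments hcomp {d}. Arguments vid {d}. Arguments vcomp {d}.
Arguments sq_hid {d}. Arguments sq_vid {d}.
Arguments sq_hcomp {d}. Arguments sq_vcomp {d}.

Definition vert_invertible (D : DoubleCat) (s : Sq D) : Prop :=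
  exists s' : Sq D,
    bot s = top s' /\ bot s' = top s /\
    sq_vcomp s s' = sq_vid (top s) /\ sq_vcomp s' s = sq_vid (bot s).

Record DoubleFunctor (D E : DoubleCat) := {
  FO : Ob D -> Ob E;
  FH : HM D -> HM E;
  FV : VM D -> VM E;
  FS : Sq D -> Sq E;
  FH_src : forall a, hs (FH a) = FO (hs a);
  FH_tgt : forall a, ht (FH a) = FO (ht a);
  FV_src : forall u, vs (FV u) = FO (vs u);
  FV_tgt : forall u, vt (FV u) = FO (vt u);
  FS_top : forall s, top (FS s) = FH (top s);
  FS_bot : forall s, bot (FS s) = FH (bot s);
  FS_lft : forall s, lft (FS s) = FV (lft s);
  FS_rgt : forall s, rgt (FS s) = FV (rgt s);
  FH_id : forall A, FH (hid A) = hid (FO A);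
  FH_comp : forall a b, ht a = hs b -> FH (hcomp a b) = hcomp (FH a) (FH b);
  FV_id : forall A, FV (vid A) = vid (FO A);
  FV_comp : forall u v, vt u = vs v -> FV (vcomp u v) = vcomp (FV u) (FV v);
  FS_hid : forall u, FS (sq_hid u) = sq_hid (FV u);
  FS_vid : forall a, FS (sq_vid a) = sq_vid (FH a);
  FS_hcomp : forall s t, rgt s = lft t -> FS (sq_hcomp s t) = sq_hcomp (FS s) (FS t);
  FS_vcomp : forall s t, bot s = top t -> FS (sq_vcomp s t) = sq_vcomp (FS s) (FS t)
}.

Arguments FO {D E}. Arguments FH {D E}. Arguments FV {D E}. Arguments FS {D E}.

Definition has_bdry (D : DoubleCat) (s : Sq D) (u : VM D) (a c : HM D) (u' : VM D) : Prop :=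
  lft s = u /\ top s = a /\ bot s = c /\ rgt s = u'.
Arguments has_bdry {D}.

Definition hb3 (D E : DoubleCat) (F : DoubleFunctor D E) : Prop :=
  forall (a c : HM D), hs c = hs a -> ht c = ht a ->
  forall beta : Sq E,
    has_bdry beta (vid (FO F (hs a))) (FH F a) (FH F c) (vid (FO F (ht a))) ->
    exists! alpha : Sq D,
      has_bdry alpha (vid (hs a)) a c (vid (ht a)) /\ FS F alpha = beta.

Definition vb2 (D E : DoubleCat) (F : DoubleFunctor D E) : Prop :=
  forall (u u' : VM D) (beta : Sq E),
    lft beta = FV F u -> rgt beta = FV F u' ->
    exists (alpha : Sq D) (psi0 psi1 : Sq E),
      lft alpha = u /\ rgt alpha = u' /\
      vert_invertible E psi0 /\ vert_invertible E psi1 /\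
      has_bdry psi0 (vid (FO F (vs u))) (top beta) (FH F (top alpha)) (vid (FO F (vs u'))) /\
      has_bdry psi1 (vid (FO F (vt u))) (bot beta) (FH F (bot alpha)) (vid (FO F (vt u'))) /\
      sq_vcomp psi0 (FS F alpha) = sq_vcomp beta psi1.

Definition vb3 (D E : DoubleCat) (F : DoubleFunctor D E) : Prop :=
  forall (u u' : VM D) (alpha alpha' : Sq D) (tau0 tau1 : Sq E),
    lft alpha = u -> rgt alpha = u' -> lft alpha' = u -> rgt alpha' = u' ->
    has_bdry tau0 (vid (FO F (vs u))) (FH F (top alpha)) (FH F (top alpha'))
      (vid (FO F (vs u'))) ->
    has_bdry tau1 (vid (FO F (vt u))) (FH F (bot alpha)) (FH F (bot alpha'))
      (vid (FO F (vt u'))) ->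
    sq_vcomp tau0 (FS F alpha') = sq_vcomp (FS F alpha) tau1 ->
    exists! sigma : Sq D * Sq D,
      has_bdry (fst sigma) (vid (vs u)) (top alpha) (top alpha') (vid (vs u')) /\
      has_bdry (snd sigma) (vid (vt u)) (bot alpha) (bot alpha') (vid (vt u')) /\
      FS F (fst sigma) = tau0 /\ FS F (snd sigma) = tau1 /\
      sq_vcomp (fst sigma) alpha' = sq_vcomp alpha (snd sigma).

(* Main.v *)
Require Import Defs.

Lemma inv_bdry (D : DoubleCat) (s s' : Sq D) X Y a b :
  has_bdry s (vid X) a b (vid Y) -> bot s = top s' -> bot s' = top s ->
  sq_vcomp s s' = sq_vid (top s) -> has_bdry s' (vid X) b a (vid Y).
Proof.
  intros [Hl [Ht [Hb Hr]]] Hst Hs't Hc.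
  assert (L := sq_vcomp_lft D s s' Hst). assert (R := sq_vcomp_rgt D s s' Hst).
  rewrite Hc, sq_vid_lft in L. rewrite Hc, sq_vid_rgt in R.
  assert (E1 : vs (lft s') = X).
  { rewrite <- sq_corner_tl, <- Hst, sq_corner_bl, Hl, vid_tgt. reflexivity. }
  assert (E2 : vs (rgt s') = Y).
  { rewrite <- sq_corner_tr, <- Hst, sq_corner_br, Hr, vid_tgt. reflexivity. }
  rewrite Hl, <- E1, vcomp_idl in L. rewrite Hr, <- E2, vcomp_idl in R.
  unfold has_bdry. rewrite <- L, <- R.
  repeat split.
  - rewrite sq_corner_tl, Hl, vid_src; reflexivity.
  - rewrite <- Hst; assumption.
  - rewrite Hs't; assumption.
  - rewrite sq_corner_tr, Hr, vid_src; reflexivity.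
Qed.

Lemma uniq_lift (D E : DoubleCat) (F : DoubleFunctor D E) :
  hb3 D E F -> vb3 D E F ->
  forall (u u' : VM D) (a c : HM D) (a1 a2 : Sq D),
    has_bdry a1 u a c u' -> has_bdry a2 u a c u' -> FS F a1 = FS F a2 -> a1 = a2.
Proof.
  intros H3 V3 u u' a c a1 a2 [l1 [t1 [b1 r1]]] [l2 [t2 [b2 r2]]] EF.
  assert (Ha : hs a = vs u) by (rewrite <- t1, sq_corner_tl, l1; reflexivity).
  assert (Ha' : ht a = vs u') by (rewrite <- t1, sq_corner_tr, r1; reflexivity).
  assert (Hc : hs c = vt u) by (rewrite <- b1, sq_corner_bl, l1; reflexivity).
  assert (Hc' : ht c = vt u') by (rewrite <- b1, sq_corner_br, r1; reflexivity).
  destruct (V3 u u' a1 a2 (sq_vid (FH F a)) (sq_vid (FH F c)) l1 r1 l2 r2)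
    as [[s0 s1] [[B0 [B1 [F0 [F1 Eq]]]] _]].
  - rewrite t1, t2. unfold has_bdry.
    rewrite sq_vid_lft, sq_vid_rgt, sq_vid_top, sq_vid_bot, FH_src, FH_tgt, Ha, Ha'.
    repeat split.
  - rewrite b1, b2. unfold has_bdry.
    rewrite sq_vid_lft, sq_vid_rgt, sq_vid_top, sq_vid_bot, FH_src, FH_tgt, Hc, Hc'.
    repeat split.
  - rewrite <- EF.
    replace (FH F a) with (top (FS F a1)) by (rewrite FS_top, t1; reflexivity).
    replace (FH F c) with (bot (FS F a1)) by (rewrite FS_bot, b1; reflexivity).
    rewrite sq_vcomp_idl, sq_vcomp_idr. reflexivity.
  - simpl in *.
    rewrite t1, t2, b1, b2 in *.
    assert (S0 : s0 = sq_vid a).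
    { destruct (H3 a a eq_refl eq_refl (sq_vid (FH F a))) as [x [_ Ux]].
      - unfold has_bdry.
        rewrite sq_vid_lft, sq_vid_rgt, sq_vid_top, sq_vid_bot, FH_src, FH_tgt.
        repeat split.
      - transitivity x; [symmetry|]; apply Ux; split; auto.
        + rewrite Ha, Ha'; exact B0.
        + unfold has_bdry. rewrite sq_vid_lft, sq_vid_rgt, sq_vid_top, sq_vid_bot.
          repeat split.
        + apply FS_vid. }
    assert (S1 : s1 = sq_vid c).
    { destruct (H3 c c eq_refl eq_refl (sq_vid (FH F c))) as [x [_ Ux]].
      - unfold has_bdry.
        rewrite sq_vid_lft, sq_vid_rgt, sq_vid_top, sq_vid_bot, FH_src, FH_tgt.
        repeat split.
      - transitivity x; [symmetry|]; apply Ux; split; auto.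
        + rewrite Hc, Hc'; exact B1.
        + unfold has_bdry. rewrite sq_vid_lft, sq_vid_rgt, sq_vid_top, sq_vid_bot.
          repeat split.
        + apply FS_vid. }
    subst s0 s1.
    rewrite <- t2, sq_vcomp_idl in Eq. rewrite <- b1, sq_vcomp_idr in Eq.
    symmetry; exact Eq.
Qed.

Theorem lemma5p3 (D E : DoubleCat) (F : DoubleFunctor D E) :
  hb3 D E F -> vb2 D E F -> vb3 D E F ->
  forall (u u' : VM D) (a c : HM D),
    hs a = vs u -> ht a = vs u' -> hs c = vt u -> ht c = vt u' ->
    forall beta : Sq E,
      has_bdry beta (FV F u) (FH F a) (FH F c) (FV F u') ->
      exists! alpha : Sq D, has_bdry alpha u a c u' /\ FS F alpha = beta.
Proof.
  intros H3 V2 V3 u u' a c Ha Ha' Hc Hc' beta Bb.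
  destruct Bb as [bl [bt [bb br]]].
  destruct (V2 u u' beta bl br) as
    (al0 & p0 & p1 & l0 & r0 & I0 & [p1' [I1a [I1b [I1c I1d]]]] & B0 & B1 & Eq).
  set (a0 := top al0) in *. set (c0 := bot al0) in *.
  assert (Ha0 : hs a0 = vs u) by (unfold a0; rewrite sq_corner_tl, l0; reflexivity).
  assert (Ha0' : ht a0 = vs u') by (unfold a0; rewrite sq_corner_tr, r0; reflexivity).
  assert (Hc0 : hs c0 = vt u) by (unfold c0; rewrite sq_corner_bl, l0; reflexivity).
  assert (Hc0' : ht c0 = vt u') by (unfold c0; rewrite sq_corner_br, r0; reflexivity).
  rewrite bt in B0. rewrite bb in B1.
  destruct (H3 a a0 (eq_trans Ha0 (eq_sym Ha)) (eq_trans Ha0' (eq_sym Ha')) p0)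
    as [s0 [[S0b S0f] _]].
  { rewrite Ha, Ha'; exact B0. }
  assert (B1' := inv_bdry E p1 p1' _ _ _ _ B1 I1a I1b I1c).
  destruct (H3 c0 c (eq_trans Hc (eq_sym Hc0)) (eq_trans Hc' (eq_sym Hc0')) p1')
    as [s1 [[S1b S1f] _]].
  { rewrite Hc0, Hc0'; exact B1'. }
  destruct S0b as [s0l [s0t [s0b s0r]]]. destruct S1b as [s1l [s1t [s1b s1r]]].
  destruct B0 as [p0l [p0t [p0b p0r]]]. destruct B1 as [p1l [p1t [p1b p1r]]].
  destruct B1' as [q1l [q1t [q1b q1r]]].
  assert (e1 : bot s0 = top al0) by exact s0b.
  assert (e2 : bot al0 = top s1) by (rewrite s1t; reflexivity).
  assert (e3 : bot s0 = top (sq_vcomp al0 s1)) by (rewrite sq_vcomp_top; auto).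
  exists (sq_vcomp s0 (sq_vcomp al0 s1)).
  split.
  - split.
    + unfold has_bdry. rewrite sq_vcomp_lft, sq_vcomp_rgt, sq_vcomp_top, sq_vcomp_bot,
        sq_vcomp_lft, sq_vcomp_rgt, sq_vcomp_bot by (try rewrite sq_vcomp_top; auto).
      rewrite s0l, s0r, l0, r0, s1l, s1r, s0t, s1b, Hc0, Hc0', vcomp_idr, vcomp_idr,
        Ha, Ha', vcomp_idl, vcomp_idl.
      repeat split.
    + rewrite FS_vcomp by (rewrite sq_vcomp_top; auto).
      rewrite FS_vcomp by auto. rewrite S0f, S1f.
      rewrite <- sq_vcomp_assoc.
      2: rewrite p0b, FS_top; reflexivity.
      2: rewrite FS_bot, q1t; reflexivity.
      rewrite Eq, sq_vcomp_assoc by (rewrite ?p1t; auto).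
      rewrite I1c, p1t, <- bb, sq_vcomp_idr. reflexivity.
  - intros x [Bx Fx]. eapply uniq_lift; eauto.
    + unfold has_bdry. rewrite sq_vcomp_lft, sq_vcomp_rgt, sq_vcomp_top, sq_vcomp_bot,
        sq_vcomp_lft, sq_vcomp_rgt, sq_vcomp_bot by (try rewrite sq_vcomp_top; auto).
      rewrite s0l, s0r, l0, r0, s1l, s1r, s0t, s1b, Hc0, Hc0', vcomp_idr, vcomp_idr,
        Ha, Ha', vcomp_idl, vcomp_idl.
      repeat split.
    + rewrite Fx.
      rewrite FS_vcomp by (rewrite sq_vcomp_top; auto).
      rewrite FS_vcomp by auto. rewrite S0f, S1f.
      rewrite <- sq_vcomp_assoc.
      2: rewrite p0b, FS_top; reflexivity.
      2: rewrite FS_bot, q1t; reflexivity.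
      rewrite Eq, sq_vcomp_assoc by (rewrite ?p1t; auto).
      rewrite I1c, p1t, <- bb, sq_vcomp_idr. reflexivity.
Qed.
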